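(* Let $X_r$ be a Dynkin diagram of finite type, $\ell\ge2$, and $U$ either $\mathbb{C}$ or $\mathbb{C}_\xi$. The assignment $Y^{(a)}_m(u)\mapsto \dfrac{M^{(a)}_m(u)}{T^{(a)}_{m-1}(u)T^{(a)}_{m+1}(u)}$ ($a\in I$, $1\le m\le t_a\ell-1$, $u\in U$), where $T^{(0)}_k(u)=T^{(a)}_0(u)=T^{(a)}_{t_a\ell}(u)=1$, defines a ring homomorphism $\varphi_\ell:\mathcal{Y}_\ell(X_r)\to\mathcal{T}_\ell(X_r)$.
   Context: Rings are commutative with identity. $\mathbb{C}_\xi:=\mathbb{C}/(2\pi\sqrt{-1}/\xi)\mathbb{Z}$, $\xi\in\mathbb{C}\setminus2\pi\sqrt{-1}\mathbb{Q}$. Enumeration of $I=\{1,\dots,r\}$: $A_r$: chain; $B_r$: chain with double bond between $r-1,r$, $\alpha_r$ short; $C_r$: same, $\alpha_r$ long, others short; $D_r$: chain $1-\cdots-(r-2)$, $r-1,r$ joined to $r-2$; $E_6$: chain $1-2-3-5-6$, $4$ joined to $3$; $E_7$: chain $1-\cdots-6$, $7$ joined to $3$; $E_8$: chain $1-\cdots-7$, $8$ joined to $5$; $F_4$: chain $1-2-3-4$, double bond between $2,3$, $\alpha_1,\alpha_2$ long; $G_2$: $\alpha_1$ long. $C$ Cartan matrix; $t_a=2$ for short $a$ in $B_r,C_r,F_4$, $t_2=3$ in $G_2$, else $1$. $M^{(a)}_m(u)$: simply laced $\prod_{b:C_{ab}=-1}T^{(b)}_m(u)$; $B_r$: $T^{(a-1)}_m(u)T^{(a+1)}_m(u)$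 ($a\le r-2$), $M^{(r-1)}_m=T^{(r-2)}_m(u)T^{(r)}_{2m}(u)$, $M^{(r)}_{2m}=T^{(r-1)}_m(u-\frac12)T^{(r-1)}_m(u+\frac12)$, $M^{(r)}_{2m+1}=T^{(r-1)}_m(u)T^{(r-1)}_{m+1}(u)$; $C_r$: $T^{(a-1)}_m(u)T^{(a+1)}_m(u)$ ($a\le r-2$), $M^{(r-1)}_{2m}=T^{(r-2)}_{2m}(u)T^{(r)}_m(u-\frac12)T^{(r)}_m(u+\frac12)$, $M^{(r-1)}_{2m+1}=T^{(r-2)}_{2m+1}(u)T^{(r)}_m(u)T^{(r)}_{m+1}(u)$, $M^{(r)}_m=T^{(r-1)}_{2m}(u)$; $F_4$: $M^{(1)}_m=T^{(2)}_m$, $M^{(2)}_m=T^{(1)}_m(u)T^{(3)}_{2m}(u)$, $M^{(3)}_{2m}=T^{(2)}_m(u-\frac12)T^{(2)}_m(u+\frac12)T^{(4)}_{2m}(u)$, $M^{(3)}_{2m+1}=T^{(2)}_m(u)T^{(2)}_{m+1}(u)T^{(4)}_{2m+1}(u)$, $M^{(4)}_m=T^{(3)}_m(u)$; $G_2$: $M^{(1)}_m=T^{(2)}_{3m}(u)$, $M^{(2)}_{3m}=T^{(1)}_m(u-\frac23)T^{(1)}_m(u)T^{(1)}_m(u+\frac23)$, $M^{(2)}_{3m+1}=T^{(1)}_m(u-\frac13)T^{(1)}_m(u+\frac13)T^{(1)}_{m+1}(u)$, $M^{(2)}_{3m+2}=T^{(1)}_m(u)T^{(1)}_{m+1}(u-\frac13)T^{(1)}_{m+1}(u+\frac13)$.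 $\mathcal{T}_\ell(X_r)$: ring with generators $T^{(a)}_m(u)^{\pm1}$ ($1\le m\le t_a\ell-1$) and relations $T^{(a)}_m(u-\tfrac1{t_a})T^{(a)}_m(u+\tfrac1{t_a})=T^{(a)}_{m-1}(u)T^{(a)}_{m+1}(u)+M^{(a)}_m(u)$ for $a\in I$, $1\le m\le t_a\ell-1$, $u\in U$, where $T^{(0)}_k=T^{(a)}_0=T^{(a)}_{t_a\ell}=1$. $\mathcal{Y}_\ell(X_r)$: ring with generators $Y^{(a)}_m(u)^{\pm1}$, $(1+Y^{(a)}_m(u))^{-1}$ ($a\in I$, $1\le m\le t_a\ell-1$, $u\in U$) and relations, for the same range, $Y^{(a)}_m(u-\tfrac1{t_a})Y^{(a)}_m(u+\tfrac1{t_a})=\dfrac{N^{(a)}_m(u)}{(1+Y^{(a)}_{m-1}(u)^{-1})(1+Y^{(a)}_{m+1}(u)^{-1})}$, where $Y^{(0)}_k=0$, $Y^{(a)}_0(u)^{-1}=Y^{(a)}_{t_a\ell}(u)^{-1}=0$, and: simply laced $N^{(a)}_m=\prod_{b:C_{ab}=-1}(1+Y^{(b)}_m(u))$; $B_r$: $(1+Y^{(a-1)}_m(u))(1+Y^{(a+1)}_m(u))$ ($a\le r-2$), $N^{(r-1)}_m=(1+Y^{(r-2)}_m(u))(1+Y^{(r)}_{2m-1}(u))(1+Y^{(r)}_{2m+1}(u))(1+Y^{(r)}_{2m}(u-\frac12))(1+Y^{(r)}_{2m}(u+\frac12))$, $N^{(r)}_{2m}=1+Y^{(r-1)}_m(u)$,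 $N^{(r)}_{2m+1}=1$; $C_r$: $(1+Y^{(a-1)}_m(u))(1+Y^{(a+1)}_m(u))$ ($a\le r-2$), $N^{(r-1)}_{2m}=(1+Y^{(r-2)}_{2m}(u))(1+Y^{(r)}_m(u))$, $N^{(r-1)}_{2m+1}=1+Y^{(r-2)}_{2m+1}(u)$, $N^{(r)}_m=(1+Y^{(r-1)}_{2m-1}(u))(1+Y^{(r-1)}_{2m+1}(u))(1+Y^{(r-1)}_{2m}(u-\frac12))(1+Y^{(r-1)}_{2m}(u+\frac12))$; $F_4$: $N^{(1)}_m=1+Y^{(2)}_m(u)$, $N^{(2)}_m=(1+Y^{(1)}_m(u))(1+Y^{(3)}_{2m-1}(u))(1+Y^{(3)}_{2m+1}(u))(1+Y^{(3)}_{2m}(u-\frac12))(1+Y^{(3)}_{2m}(u+\frac12))$, $N^{(3)}_{2m}=(1+Y^{(2)}_m(u))(1+Y^{(4)}_{2m}(u))$, $N^{(3)}_{2m+1}=1+Y^{(4)}_{2m+1}(u)$, $N^{(4)}_m=1+Y^{(3)}_m(u)$; $G_2$: $N^{(1)}_m=(1+Y^{(2)}_{3m-2}(u))(1+Y^{(2)}_{3m+2}(u))(1+Y^{(2)}_{3m}(u))\prod_{\epsilon=\pm1}(1+Y^{(2)}_{3m-1}(u+\frac\epsilon3))(1+Y^{(2)}_{3m+1}(u+\frac\epsilon3))(1+Y^{(2)}_{3m}(u+\frac{2\epsilon}3))$, $N^{(2)}_{3m}=1+Y^{(1)}_m(u)$, $N^{(2)}_{3m+1}=N^{(2)}_{3m+2}=1$.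 *)

(* Defs.v *)
(* Rings presented by generators and relations are built
   honestly as quotients of free commutative polynomial rings over Z
   (multinomials' monoid algebras {malg int[cmonom V]}) by the ideal
   generated by the relations.  ℂ is Stdlib's R[i] (real_closed complex). *)
From HB Require Import structures.
From mathcomp Require Import all_boot all_order all_algebra.
From mathcomp Require Import generic_quotient ring_quotient.
From mathcomp Require Import boolp.
From mathcomp Require Import Rstruct.
From mathcomp Require Import complex.
From mathcomp Require Import monalg.
From Stdlib Require Rtrigo1.

Set Implicit Arguments.
Unset Strict Implicit.
Unset Printing Implicit Defensive.

Import Order.TTheory GRing.Theory Num.Theory.
Local Open Scope ring_scope.
Local Open Scope quotient_scope.

Section GenIdeal.
Variables (R : comPzRingType) (S : R -> Prop).

Definition gen_ideal : {pred R} := fun x =>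
  `[< exists s : seq (R * R),
        (forall p, p \in s -> S p.2) /\ x = \sum_(p <- s) p.1 * p.2 >].

Lemma gen_ideal_zmod : zmod_closed gen_ideal.
Proof.
split.
  by apply/asboolP; exists [::]; split => //; rewrite big_nil.
move=> x y /asboolP[s [Hs ->]] /asboolP[t [Ht ->]].
apply/asboolP; exists (s ++ [seq (- p.1, p.2) | p <- t]); split.
  move=> p; rewrite mem_cat => /orP[/Hs //|/mapP[q /Ht Hq ->]] //.
rewrite big_cat big_map /= -sumrN; congr (_ + _).
by apply: eq_bigr => p _; rewrite mulNr.
Qed.

HB.instance Definition _ := GRing.isZmodClosed.Build R gen_ideal
  gen_ideal_zmod.

Lemma gen_idealM a x : x \in gen_ideal -> a * x \in gen_ideal.
Proof.
move=> /asboolP[s [Hs ->]]; apply/asboolP.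
exists [seq (a * p.1, p.2) | p <- s]; split.
  by move=> p /mapP[q /Hs Hq ->].
rewrite big_map mulr_sumr; apply: eq_bigr => p _; by rewrite mulrA.
Qed.

Lemma gen_ideal_gen x : S x -> x \in gen_ideal.
Proof.
move=> Sx; apply/asboolP; exists [:: (1, x)]; split.
  by move=> p; rewrite inE => /eqP->.
by rewrite big_seq1 mul1r.
Qed.

Definition quot_ring := @Quotient.quot R gen_ideal.
HB.instance Definition _ := GRing.Zmodule.on quot_ring.
HB.instance Definition _ := Choice.on quot_ring.

Local Notation piq := (\pi_quot_ring).

Definition qone : quot_ring := piq 1.
Fact qmul_key : unit. Proof. by []. Qed.
Definition qmul : quot_ring -> quot_ring -> quot_ring :=
  locked_with qmul_key (fun x y => piq (repr x * repr y)).
Canonical qmul_unlockable := [unlockable fun qmul].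

Lemma equiv_ideal (x y : R) : (piq x == piq y) = (x - y \in gen_ideal).
Proof. by rewrite Quotient.idealrBE. Qed.

Lemma pi_qmul x y : piq (x * y) = qmul (piq x) (piq y).
Proof.
rewrite [qmul]unlock; apply/eqP; rewrite equiv_ideal.
have Ex : x - repr (piq x) \in gen_ideal by rewrite -equiv_ideal reprK.
have Ey : y - repr (piq y) \in gen_ideal by rewrite -equiv_ideal reprK.
have -> : x * y - repr (piq x) * repr (piq y) =
          y * (x - repr (piq x)) + repr (piq x) * (y - repr (piq y)).
  by rewrite !mulrBr [y * x]mulrC [y * repr _]mulrC addrA subrK.
by rewrite rpredD // gen_idealM.
Qed.

Lemma pi_qadd x y : piq (x + y) = piq x + piq y.
Proof. by rewrite raddfD. Qed.

Lemma qmulA : associative qmul.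
Proof.
elim/quotW=> x; elim/quotW=> y; elim/quotW=> z.
by rewrite -!pi_qmul mulrA.
Qed.

Lemma qmulC : commutative qmul.
Proof. by elim/quotW=> x; elim/quotW=> y; rewrite -!pi_qmul mulrC. Qed.

Lemma qmul1 : left_id qone qmul.
Proof. by elim/quotW=> x; rewrite /qone -pi_qmul mul1r. Qed.

Lemma qmulDl : left_distributive qmul +%R.
Proof.
elim/quotW=> x; elim/quotW=> y; elim/quotW=> z.
by rewrite -pi_qadd -!pi_qmul mulrDl pi_qadd.
Qed.

HB.instance Definition _ := GRing.Zmodule_isComPzRing.Build quot_ring
  qmulA qmulC qmul1 qmulDl.

Definition qproj (x : R) : quot_ring := piq x.

End GenIdeal.

(** * Dynkin diagrams of finite type (with the enumeration of the paper)    *)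

Inductive dynkin :=
  | TA of nat | TB of nat | TC of nat | TD of nat
  | TE6 | TE7 | TE8 | TF4 | TG2.

Definition rank (X : dynkin) : nat :=
  match X with
  | TA r | TB r | TC r | TD r => r
  | TE6 => 6 | TE7 => 7 | TE8 => 8 | TF4 => 4 | TG2 => 2
  end.

Definition valid_dynkin (X : dynkin) : bool :=
  match X with
  | TA r => 1 <= r | TB r => 2 <= r | TC r => 2 <= r | TD r => 4 <= r
  | _ => true
  end%N.

Definition tnum (X : dynkin) (a : nat) : nat :=
  match X with
  | TB r => if a == r then 2 else 1
  | TC r => if a < r then 2 else 1
  | TF4 => if 3 <= a then 2 else 1
  | TG2 => if a == 2 then 3 else 1
  | _ => 1
  end%N.

Definition sl_edge0 (X : dynkin) (a b : nat) : bool :=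
  match X with
  | TA r => (a.+1 == b)
  | TD r => ((a.+1 == b) && (b <= r - 2)) || ((a == r - 2) && (b == r))
  | TE6 => ((a, b) \in [:: (1, 2); (2, 3); (3, 5); (5, 6); (3, 4)])
  | TE7 => ((a, b) \in [:: (1, 2); (2, 3); (3, 4); (4, 5); (5, 6); (3, 7)])
  | TE8 => ((a, b) \in [:: (1, 2); (2, 3); (3, 4); (4, 5); (5, 6); (6, 7);
                          (5, 8)])
  | _ => false
  end%N.

(** D_r: chain 1-...-(r-2) and r-1, r joined to r-2. *)
Definition sl_edge (X : dynkin) (a b : nat) : bool :=
  sl_edge0 X a b || sl_edge0 X b a ||
  (if X is TD r then ((a == r - 2) && (b == r - 1)) ||
                     ((b == r - 2) && (a == r - 1)) else false)%N.

Definition adj (X : dynkin) (a : nat) : seq nat :=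
  [seq b <- iota 1 (rank X) | sl_edge X a b].

Section MN.
Variables (U : zmodType) (iota : rat -> U).
Definition sh (u : U) (q : rat) : U := u + iota q.

Variable (R : pzRingType).

(** [T a k u] stands for T^{(a)}_k(u) (boundary conventions are built in
    the function T supplied). *)
Definition Mfun (T : nat -> nat -> U -> R) (X : dynkin) (a m : nat) (u : U)
  : R :=
  let h := (1 / 2)%R : rat in
  let th := (1 / 3)%R : rat in
  match X with
  | TB r =>
      if (a <= r - 2)%N then T a.-1 m u * T a.+1 m u
      else if a == (r - 1)%N then T (r - 2)%N m u * T r m.*2 u
      else if odd m then T (r - 1)%N m./2 u * T (r - 1)%N m./2.+1 u
      else T (r - 1)%N m./2 (sh u (- h)) * T (r - 1)%N m./2 (sh u h)
  | TC r =>
      if (a <= r - 2)%N then T a.-1 m u * T a.+1 m u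
      else if a == (r - 1)%N then
        (if odd m then T (r - 2)%N m u * T r m./2 u * T r m./2.+1 u
         else T (r - 2)%N m u * T r m./2 (sh u (- h)) * T r m./2 (sh u h))
      else T (r - 1)%N m.*2 u
  | TF4 =>
      if a == 1%N then T 2 m u
      else if a == 2%N then T 1 m u * T 3 m.*2 u
      else if a == 3%N then
        (if odd m then T 2 m./2 u * T 2 m./2.+1 u * T 4 m u
         else T 2 m./2 (sh u (- h)) * T 2 m./2 (sh u h) * T 4 m u)
      else T 3 m u
  | TG2 =>
      if a == 1%N then T 2 (3 * m)%N u
      else if ((m %% 3)%N == 0)%N then
        T 1 (m %/ 3)%N (sh u (- (2 * th))) * T 1 (m %/ 3)%N u
          * T 1 (m %/ 3)%N (sh u (2 * th))
      else if ((m %% 3)%N == 1)%N then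
        T 1 (m %/ 3)%N (sh u (- th)) * T 1 (m %/ 3)%N (sh u th)
          * T 1 (m %/ 3)%N.+1 u
      else
        T 1 (m %/ 3)%N u * T 1 (m %/ 3)%N.+1 (sh u (- th))
          * T 1 (m %/ 3)%N.+1 (sh u th)
  | _ => \prod_(b <- adj X a) T b m u
  end.

(** [Y a k u] stands for Y^{(a)}_k(u) (with Y^{(0)}_k = 0 built in). *)
Definition Nfun (Y : nat -> nat -> U -> R) (X : dynkin) (a m : nat) (u : U)
  : R :=
  let h := (1 / 2)%R : rat in
  let th := (1 / 3)%R : rat in
  let P b k v := 1 + Y b k v in
  match X with
  | TB r =>
      if (a <= r - 2)%N then P a.-1 m u * P a.+1 m u
      else if a == (r - 1)%N then
        P (r - 2)%N m u * P r m.*2.-1 u * P r m.*2.+1 u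
          * P r m.*2 (sh u (- h)) * P r m.*2 (sh u h)
      else if odd m then 1
      else P (r - 1)%N m./2 u
  | TC r =>
      if (a <= r - 2)%N then P a.-1 m u * P a.+1 m u
      else if a == (r - 1)%N then
        (if odd m then P (r - 2)%N m u
         else P (r - 2)%N m u * P r m./2 u)
      else P (r - 1)%N m.*2.-1 u * P (r - 1)%N m.*2.+1 u
             * P (r - 1)%N m.*2 (sh u (- h)) * P (r - 1)%N m.*2 (sh u h)
  | TF4 =>
      if a == 1%N then P 2 m u
      else if a == 2%N then
        P 1 m u * P 3 m.*2.-1 u * P 3 m.*2.+1 u
          * P 3 m.*2 (sh u (- h)) * P 3 m.*2 (sh u h)
      else if a == 3%N then
        (if odd m then P 4 m u else P 2 m./2 u * P 4 m u)
      else P 3 m u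
  | TG2 =>
      if a == 1%N then
        P 2 (3 * m - 2)%N u * P 2 (3 * m + 2)%N u * P 2 (3 * m)%N u
        * (P 2 (3 * m - 1)%N (sh u (- th)) * P 2 (3 * m + 1)%N (sh u (- th))
             * P 2 (3 * m)%N (sh u (- (2 * th))))
        * (P 2 (3 * m - 1)%N (sh u th) * P 2 (3 * m + 1)%N (sh u th)
             * P 2 (3 * m)%N (sh u (2 * th)))
      else if ((m %% 3)%N == 0)%N then P 1 (m %/ 3)%N u
      else 1
  | _ => \prod_(b <- adj X a) P b m u
  end.

End MN.

Section Rings.
Variables (X : dynkin) (l : nat) (U : zmodType) (iota : rat -> U).

Definition validx (p : nat * nat) : bool :=
  ((1 <= p.1 <= rank X) && (1 <= p.2 < tnum X p.1 * l))%N.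

Definition Idx := {p : nat * nat | validx p}.

Definition tinv (a : nat) : rat := ((tnum X a)%:R)^-1.

(** ** The ring T_l(X_r).
    Generators: T^{(a)}_m(u) (flag [false]) and T^{(a)}_m(u)^{-1}
    (flag [true]), for (a, m) admissible and u in U. *)
Definition TVar := (bool * Idx * U)%type.
Definition PolT := {malg int[cmonom TVar]}.

(** The variable (inv, a, k, u) if (a, k) is admissible, and 1 otherwise
    (this encodes T^{(0)}_k = T^{(a)}_0 = T^{(a)}_{t_a l} = 1). *)
Definition var_T (inv : bool) (a k : nat) (u : U) : PolT :=
  if insub (a, k) is Some i then << ucm ((inv, i, u) : TVar) >> else 1.

Definition Tv := var_T false.
Definition Tiv := var_T true.

Definition Trel (p : PolT) : Prop :=
  (exists (i : Idx) (u : U),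
      p = << ucm ((false, i, u) : TVar) >> * << ucm ((true, i, u) : TVar) >> - 1)
  \/ (exists (a m : nat) (u : U), validx (a, m) /\
      p = Tv a m (sh iota u (- tinv a)) * Tv a m (sh iota u (tinv a))
          - (Tv a m.-1 u * Tv a m.+1 u + Mfun iota Tv X a m u)).

Definition TRing := quot_ring Trel.

Definition TT (a k : nat) (u : U) : TRing := qproj Trel (Tv a k u).
Definition TTinv (a k : nat) (u : U) : TRing := qproj Trel (Tiv a k u).

(** ** The ring Y_l(X_r).
    Generators (kind 0) Y^{(a)}_m(u), (kind 1) Y^{(a)}_m(u)^{-1},
    (kind 2) (1 + Y^{(a)}_m(u))^{-1}. *)
Definition YVar := ('I_3 * Idx * U)%type.
Definition PolY := {malg int[cmonom YVar]}.

Definition yk0 : 'I_3 := @Ordinal 3 0 isT.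
Definition yk1 : 'I_3 := @Ordinal 3 1 isT.
Definition yk2 : 'I_3 := @Ordinal 3 2 isT.

(** The variable (kind, a, k, u) if (a, k) is admissible, and 0 otherwise
    (this encodes Y^{(0)}_k = 0 and Y^{(a)}_0^{-1} = Y^{(a)}_{t_a l}^{-1} = 0). *)
Definition var_Y (kind : 'I_3) (a k : nat) (u : U) : PolY :=
  if insub (a, k) is Some i then << ucm ((kind, i, u) : YVar) >> else 0.

Definition Yv := var_Y yk0.
Definition Yiv := var_Y yk1.

(** Defining relations of Y_l(X_r), written as elements to be set to 0.
    The Y-system relation
      Y(u - 1/t_a) Y(u + 1/t_a) = N / ((1 + Y_{m-1}^{-1}) (1 + Y_{m+1}^{-1}))
    is stated after clearing the denominator. *)
Definition Yrel (p : PolY) : Prop :=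
  (exists (i : Idx) (u : U),
      p = << ucm ((yk0, i, u) : YVar) >> * << ucm ((yk1, i, u) : YVar) >> - 1)
  \/ (exists (i : Idx) (u : U),
      p = (1 + << ucm ((yk0, i, u) : YVar) >>) * << ucm ((yk2, i, u) : YVar) >>
          - 1)
  \/ (exists (a m : nat) (u : U), validx (a, m) /\
      p = Yv a m (sh iota u (- tinv a)) * Yv a m (sh iota u (tinv a))
            * ((1 + Yiv a m.-1 u) * (1 + Yiv a m.+1 u))
          - Nfun iota Yv X a m u).

Definition YRing := quot_ring Yrel.

Definition YY (a m : nat) (u : U) : YRing := qproj Yrel (Yv a m u).

Definition phi_image (a m : nat) (u : U) : TRing :=
  Mfun iota TT X a m u * TTinv a m.-1 u * TTinv a m.+1 u.

Definition defines_ring_hom : Prop :=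
  exists phi : {rmorphism YRing -> TRing},
    forall (a m : nat) (u : U), validx (a, m) -> phi (YY a m u) = phi_image a m u.

End Rings.

Definition Cc := (Rdefinitions.R)[i].

Definition iota_C (q : rat) : Cc := ratr q.

Definition two_pi_i : Cc := Complex 0 (2 * Rtrigo1.PI).

Section Cxi.
Variable xi : Cc.

Definition lattice_xi : {pred Cc} := fun z =>
  `[< exists n : int, z = n%:~R * (two_pi_i / xi) >].

Lemma lattice_xi_zmod : zmod_closed lattice_xi.
Proof.
split; first by apply/asboolP; exists 0; rewrite mul0r.
move=> x y /asboolP[n ->] /asboolP[k ->]; apply/asboolP; exists (n - k).
by rewrite -mulrBl -intrB.
Qed.

HB.instance Definition _ := GRing.isZmodClosed.Build Cc lattice_xi
  lattice_xi_zmod.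

Definition Cxi := @Quotient.quot Cc lattice_xi.
HB.instance Definition _ := GRing.Zmodule.on Cxi.

Definition iota_xi (q : rat) : Cxi := \pi_Cxi (ratr q).
End Cxi.

(* Main.v *)
Require Import Defs.
From HB Require Import structures.
From mathcomp Require Import all_boot all_order all_algebra.
From mathcomp Require Import generic_quotient ring_quotient boolp.
From mathcomp Require Import Rstruct complex monalg finmap.
From mathcomp Require Import ring zify.

Set Implicit Arguments.
Unset Strict Implicit.
Unset Printing Implicit Defensive.
Import GRing.Theory.
Local Open Scope ring_scope.
Local Open Scope quotient_scope.
Section Eval.
Variables (V : choiceType) (S : comPzRingType) (v : V -> S).

Definition hm (m : cmonom V) : S := \prod_(i <- finsupp m) v i ^+ m i.

Lemma hmEw (d : {fset V}) (m : cmonom V) : (finsupp m `<=` d)%fset ->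
  hm m = \prod_(i <- d) v i ^+ m i.
Proof.
move=> le; rewrite /hm (big_fset_incl _ le) // => x _.
by rewrite -cmE_eq0 => /eqP ->; rewrite expr0.
Qed.

Lemma hm1 : hm (@mone _) = 1.
Proof. by rewrite /hm mdom1 big_seq_fset0. Qed.

Lemma hmM (m1 m2 : cmonom V) : hm (mmul m1 m2) = hm m1 * hm m2.
Proof.
rewrite {1}/hm mdomD (hmEw (fsubsetUl _ (finsupp m2))) (hmEw (fsubsetUr (finsupp m1) _)).
by rewrite -big_split /=; apply: eq_bigr => i _; rewrite cmM exprD.
Qed.

Lemma hmU i : hm (ucm i) = v i.
Proof. by rewrite /hm mdomU big_seq_fset1 cmUU expr1. Qed.

Definition ev (g : {malg int[cmonom V]}) : S :=
  \sum_(k <- msupp g) (g@_k)%:~R * hm k.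

Lemma evEw (d : {fset cmonom V}) g : (msupp g `<=` d)%fset ->
  ev g = \sum_(k <- d) (g@_k)%:~R * hm k.
Proof.
move=> le; rewrite /ev (big_fset_incl _ le) // => x _ /mcoeff_outdom ->.
by rewrite mul0r.
Qed.

Lemma evU c k : ev << c *g k >> = c%:~R * hm k.
Proof. by rewrite (evEw msuppU_le) big_seq_fset1 mcoeffUU. Qed.

Lemma ev_is_additive : additive ev.
Proof.
move=> g1 g2; rewrite (evEw (msuppB_le g1 g2)).
rewrite (evEw (fsubsetUl _ (msupp g2))) (evEw (fsubsetUr (msupp g1) _)).
by rewrite -sumrB; apply: eq_bigr => k _; rewrite mcoeffB intrB mulrBl.
Qed.

HB.instance Definition _ := GRing.isAdditive.Build {malg int[cmonom V]} S ev
  ev_is_additive.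

Lemma ev_is_multiplicative : multiplicative ev.
Proof.
split => [g1 g2|]; last by rewrite -mpolyC1E evU hm1 mulr1.
rewrite malgME raddf_sum [ev g1]/ev [ev g2]/ev mulr_suml; apply: eq_bigr => i _.
rewrite raddf_sum mulr_sumr; apply: eq_bigr => j _.
transitivity ((g1@_i * g2@_j)%:~R * hm (mmul i j)); first exact: evU.
by rewrite intrM hmM; ring.
Qed.

HB.instance Definition _ := GRing.isMultiplicative.Build {malg int[cmonom V]} S ev
  ev_is_multiplicative.

Lemma ev_var x : ev << ucm x >> = v x.
Proof. by rewrite evU hmU mul1r. Qed.
End Eval.
Section Descent.
Variables (R : comPzRingType) (S : R -> Prop).

Lemma qproj_is_additive : additive (qproj S).
Proof. by move=> x y; rewrite /qproj raddfB. Qed.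
HB.instance Definition _ := GRing.isAdditive.Build R (quot_ring S) (qproj S)
  qproj_is_additive.
Lemma qproj_is_multiplicative : multiplicative (qproj S).
Proof. by split => // x y; exact: pi_qmul. Qed.
HB.instance Definition _ := GRing.isMultiplicative.Build R (quot_ring S) (qproj S)
  qproj_is_multiplicative.

Lemma qproj_rel p : S p -> qproj S p = 0.
Proof.
move=> Sp; apply/eqP; rewrite -(raddf0 (qproj S)) /qproj equiv_ideal subr0.
exact: gen_ideal_gen.
Qed.

Variables (A : comPzRingType) (f : {rmorphism R -> A}).
Hypothesis Hf : forall p, S p -> f p = 0.

Lemma f_ideal x : x \in gen_ideal S -> f x = 0.
Proof.
move=> /asboolP[s [Hs ->]]; rewrite rmorph_sum big1_seq // => p /andP[_ /Hs Sp].
by rewrite rmorphM (Hf Sp) mulr0.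
Qed.

Definition desc (Hf' : forall p, S p -> f p = 0) (x : quot_ring S) : A := f (repr x).

Lemma descE r : desc Hf (qproj S r) = f r.
Proof.
apply/eqP; rewrite -subr_eq0 -rmorphB; apply/eqP/f_ideal.
by rewrite -equiv_ideal reprK.
Qed.

Lemma desc_is_additive : additive (desc Hf).
Proof.
elim/quotW => x; elim/quotW => y.
by rewrite -[\pi x]/(qproj S x) -[\pi y]/(qproj S y) -raddfB !descE rmorphB.
Qed.
HB.instance Definition _ := GRing.isAdditive.Build (quot_ring S) A (desc Hf)
  desc_is_additive.

Lemma desc_is_multiplicative : multiplicative (desc Hf).
Proof.
split; last by rewrite -[1]/(qproj S 1) descE rmorph1.
elim/quotW => x; elim/quotW => y.
by rewrite -[\pi x]/(qproj S x) -[\pi y]/(qproj S y) -rmorphM !descE rmorphM.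
Qed.
HB.instance Definition _ := GRing.isMultiplicative.Build (quot_ring S) A (desc Hf)
  desc_is_multiplicative.
End Descent.
Definition cn (c n j : nat) : nat := (c * j + n)%N.
Definition canon (n d : int) : rat := n%:~R / d%:~R.

Lemma par1 m : (0 < m)%N -> {j | m = j.+1}.
Proof. by case: m => // j _; exists j. Qed.
Lemma par2 m : (0 < m)%N -> {j | m = j.*2.+1} + {j | m = j.*2.+2}.
Proof.
move=> m0; case: (boolP (odd m)) => o.
  by left; exists m./2; lia.
by right; exists (m./2).-1; lia.
Qed.
Lemma par3 m : (0 < m)%N -> {j | m = (3 * j).+1} + {j | m = (3 * j).+2} + {j | m = (3 * j).+3}.
Proof.
move=> m0; have : ((m %% 3)%N < 3)%N by rewrite ltn_mod.
case e: (m %% 3)%N => [|[|[|k]]] _ //.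
- by right; exists (m %/ 3)%N.-1; lia.
- by left; left; exists (m %/ 3)%N; lia.
- by left; right; exists (m %/ 3)%N; lia.
Qed.

Lemma adj_range (Y : dynkin) a b : b \in adj Y a -> (1 <= b <= rank Y)%N.
Proof. rewrite /adj mem_filter mem_iota => /andP[_]; lia. Qed.

Section Comb.
Variables (X : dynkin) (l : nat) (U : zmodType) (iota : rat -> U).
Hypothesis iotaD : forall p q, iota (p + q) = iota p + iota q.

Local Notation sh := (sh iota).

Lemma iota0 : iota 0 = 0.
Proof. have h := iotaD 0 0; rewrite addr0 in h. by apply: (addrI (iota 0)); rewrite addr0 -h. Qed.

Lemma sh0 u : sh u 0 = u.
Proof. by rewrite /Defs.sh iota0 addr0. Qed.

Lemma shsh u p q : sh (sh u p) q = sh u (p + q).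
Proof. by rewrite /Defs.sh iotaD addrA. Qed.

Lemma sh_canon u q n d : numq q = n -> denq q = d -> sh u q = sh u (canon n d).
Proof. by move=> <- <-; rewrite /canon divq_num_den. Qed.

Definition atom := (nat * nat * U)%type.

Definition Nlist (a m : nat) (u : U) : seq atom :=
  let h := (1 / 2)%R : rat in
  let th := (1 / 3)%R : rat in
  match X with
  | TB r =>
      if (a <= r - 2)%N then [:: (a.-1, m, u); (a.+1, m, u)]
      else if a == (r - 1)%N then
        [:: ((r - 2)%N, m, u); (r, m.*2.-1, u); (r, m.*2.+1, u);
            (r, m.*2, sh u (- h)); (r, m.*2, sh u h)]
      else if odd m then [::]
      else [:: ((r - 1)%N, m./2, u)]
  | TC r =>
      if (a <= r - 2)%N then [:: (a.-1, m, u); (a.+1, m, u)]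
      else if a == (r - 1)%N then
        (if odd m then [:: ((r - 2)%N, m, u)]
         else [:: ((r - 2)%N, m, u); (r, m./2, u)])
      else [:: ((r - 1)%N, m.*2.-1, u); ((r - 1)%N, m.*2.+1, u);
               ((r - 1)%N, m.*2, sh u (- h)); ((r - 1)%N, m.*2, sh u h)]
  | TF4 =>
      if a == 1%N then [:: (2%N, m, u)]
      else if a == 2%N then
        [:: (1%N, m, u); (3%N, m.*2.-1, u); (3%N, m.*2.+1, u);
            (3%N, m.*2, sh u (- h)); (3%N, m.*2, sh u h)]
      else if a == 3%N then
        (if odd m then [:: (4%N, m, u)] else [:: (2%N, m./2, u); (4%N, m, u)])
      else [:: (3%N, m, u)]
  | TG2 =>
      if a == 1%N then
        [:: (2%N, (3 * m - 2)%N, u); (2%N, (3 * m + 2)%N, u); (2%N, (3 * m)%N, u);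
            (2%N, (3 * m - 1)%N, sh u (- th)); (2%N, (3 * m + 1)%N, sh u (- th));
            (2%N, (3 * m)%N, sh u (- (2 * th)));
            (2%N, (3 * m - 1)%N, sh u th); (2%N, (3 * m + 1)%N, sh u th);
            (2%N, (3 * m)%N, sh u (2 * th))]
      else if ((m %% 3)%N == 0)%N then [:: (1%N, (m %/ 3)%N, u)]
      else [::]
  | _ => [seq (b, m, u) | b <- adj X a]
  end.

Lemma Nfun_list (R : comPzRingType) (Y : nat -> nat -> U -> R) a m u :
  Nfun iota Y X a m u = \prod_(x <- Nlist a m u) (1 + Y x.1.1 x.1.2 x.2).
Proof.
rewrite /Nfun /Nlist; case: X => [r|r|r|r|||||] /=;
  try by rewrite big_map.
all: repeat (case: ifP => _); rewrite ?big_cons ?big_nil /=; ring.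
Qed.

Definition Mlist (a m : nat) (u : U) : seq atom :=
  let h := (1 / 2)%R : rat in
  let th := (1 / 3)%R : rat in
  match X with
  | TB r =>
      if (a <= r - 2)%N then [:: (a.-1, m, u); (a.+1, m, u)]
      else if a == (r - 1)%N then [:: ((r - 2)%N, m, u); (r, m.*2, u)]
      else if odd m then [:: ((r - 1)%N, m./2, u); ((r - 1)%N, m./2.+1, u)]
      else [:: ((r - 1)%N, m./2, sh u (- h)); ((r - 1)%N, m./2, sh u h)]
  | TC r =>
      if (a <= r - 2)%N then [:: (a.-1, m, u); (a.+1, m, u)]
      else if a == (r - 1)%N then
        (if odd m then [:: ((r - 2)%N, m, u); (r, m./2, u); (r, m./2.+1, u)]
         else [:: ((r - 2)%N, m, u); (r, m./2, sh u (- h)); (r, m./2, sh u h)])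
      else [:: ((r - 1)%N, m.*2, u)]
  | TF4 =>
      if a == 1%N then [:: (2%N, m, u)]
      else if a == 2%N then [:: (1%N, m, u); (3%N, m.*2, u)]
      else if a == 3%N then
        (if odd m then [:: (2%N, m./2, u); (2%N, m./2.+1, u); (4%N, m, u)]
         else [:: (2%N, m./2, sh u (- h)); (2%N, m./2, sh u h); (4%N, m, u)])
      else [:: (3%N, m, u)]
  | TG2 =>
      if a == 1%N then [:: (2%N, (3 * m)%N, u)]
      else if ((m %% 3)%N == 0)%N then
        [:: (1%N, (m %/ 3)%N, sh u (- (2 * th))); (1%N, (m %/ 3)%N, u);
            (1%N, (m %/ 3)%N, sh u (2 * th))]
      else if ((m %% 3)%N == 1)%N then
        [:: (1%N, (m %/ 3)%N, sh u (- th)); (1%N, (m %/ 3)%N, sh u th);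
            (1%N, (m %/ 3)%N.+1, u)]
      else
        [:: (1%N, (m %/ 3)%N, u); (1%N, (m %/ 3)%N.+1, sh u (- th));
            (1%N, (m %/ 3)%N.+1, sh u th)]
  | _ => [seq (b, m, u) | b <- adj X a]
  end.

Lemma Mfun_list (R : comPzRingType) (T : nat -> nat -> U -> R) a m u :
  Mfun iota T X a m u = \prod_(x <- Mlist a m u) T x.1.1 x.1.2 x.2.
Proof.
rewrite /Mfun /Mlist; case: X => [r|r|r|r|||||] /=;
  try by rewrite big_map.
all: repeat (case: ifP => _); rewrite ?big_cons ?big_nil /=; ring.
Qed.

Ltac canon_sh :=
  repeat match goal with
  | |- context [Defs.sh ?io ?v ?q] =>
    lazymatch q with
    | canon _ _ => fail
    | _ => let n := eval vm_compute in (numq q) in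
           let d := eval vm_compute in (denq q) in
           rewrite (@sh_canon v q n d erefl erefl)
    end
  end.

Ltac canon_nat T j :=
  repeat match goal with
  | |- context [T ?b ?k ?w] =>
    lazymatch k with
    | cn _ _ _ => fail
    | _ => match eval pattern j in k with
           | ?F _ => let n0 := eval vm_compute in (F 0%N) in
                     let n1 := eval vm_compute in (F 1%N) in
                     let c := eval vm_compute in (n1 - n0)%N in
                     let E := fresh "E" in
                     assert (E : k = cn c n0 j) by (rewrite /cn; lia);
                     rewrite E; clear E
           end
    end
  end.

Ltac resolve_ifs := repeat (rewrite ?big_cons ?big_nil /=; case: ifP => /= ?; try (exfalso; lia)).

Ltac finish_core T u j :=
  rewrite ?big_cons ?big_nil /= -(sh0 u) ?shsh; canon_sh; canon_nat T j; ring.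

Lemma validx_am a m : validx X l (a, m) -> (1 <= a <= rank X)%N /\ (0 < m)%N.
Proof. by rewrite /validx /= => /andP[-> /andP[]]. Qed.

Lemma core (A : comPzRingType) (T : nat -> nat -> U -> A) a m u :
  valid_dynkin X -> validx X l (a, m) ->
  Mfun iota T X a m (sh u (- tinv X a)) * Mfun iota T X a m (sh u (tinv X a))
    * \prod_(x <- Nlist a m u) (T x.1.1 x.1.2.-1 x.2 * T x.1.1 x.1.2.+1 x.2)
  = Mfun iota T X a m.-1 u * Mfun iota T X a m.+1 u
    * \prod_(x <- Nlist a m u)
        (T x.1.1 x.1.2 (sh x.2 (- tinv X x.1.1)) * T x.1.1 x.1.2 (sh x.2 (tinv X x.1.1))).
Proof.
move=> vX /validx_am [/andP[a1 ar] m0].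
rewrite /Mfun /Nlist /tinv.
case: X vX ar => [r|r|r|r|||||] /= vX ar.
1,4,5,6,7: by rewrite !big_map -!big_split /=; apply: eq_bigr => b _; ring.
1,2,3: case: (par2 m0) => [][j ->]; resolve_ifs; finish_core T u j.
case: (par3 m0) => [[][j ->]|[j ->]]; resolve_ifs; finish_core T u j.
Qed.

Definition okidx (b k : nat) : bool := validx X l (b, k) || ~~ (1 <= b <= rank X)%N.


Lemma Mbound a k u : valid_dynkin X -> (1 <= l)%N -> (1 <= a <= rank X)%N ->
  k = 0%N \/ k = (tnum X a * l)%N ->
  all (fun x : atom => ~~ validx X l x.1) (Mlist a k u).
Proof.
move=> vX l1 ar hk; rewrite /Mlist.
case: X vX ar hk => [r|r|r|r|||||] /= vX ar hk; case: hk => ->;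
  try (apply/allP => x /mapP[b /adj_range hb ->] /=;
       rewrite /validx /tnum /=; lia).
all: rewrite /validx /tnum /=; resolve_ifs; lia.
Qed.

Lemma Nok a m u : valid_dynkin X -> validx X l (a, m) ->
  all (fun x : atom => okidx x.1.1 x.1.2) (Nlist a m u).
Proof.
move=> vX; rewrite /Nlist /okidx.
case: X vX => [r|r|r|r|||||] /= vX;
  try (move=> hv; apply/allP => x /mapP[b /adj_range hb ->] /=;
       move: hv; rewrite /validx /tnum /=; lia).
all: rewrite /validx /tnum /=; resolve_ifs; lia.
Qed.

Lemma out_range_invalid b k : ~~ (1 <= b <= rank X)%N -> ~~ validx X l (b, k).
Proof. by rewrite /validx /=; case: (1 <= b <= rank X)%N. Qed.

Lemma alg_id (A : comPzRingType) (Mm Mp M1 M2 Mi1 Mi2 G D Di t1 s1 t2 s2 t3 s3 t4 s4 : A) :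
  t1 * s1 = 1 -> t2 * s2 = 1 -> t3 * s3 = 1 -> t4 * s4 = 1 ->
  M1 * Mi1 = 1 -> M2 * Mi2 = 1 -> D * Di = 1 -> Mm * Mp * D = M1 * M2 * G ->
  Mm * s1 * s2 * (Mp * s3 * s4) * (t1 * t3 * Mi1 * (t2 * t4 * Mi2)) = G * Di.
Proof.
move=> h1 h2 h3 h4 e1 e2 hD hc.
transitivity (Mm * Mp * Mi1 * Mi2 * ((t1 * s1) * (t2 * s2) * (t3 * s3) * (t4 * s4))); first ring.
rewrite h1 h2 h3 h4 !mulr1.
transitivity ((Mm * Mp * D) * Mi1 * Mi2 * Di); first by rewrite -[LHS]mulr1 -hD; ring.
rewrite hc; transitivity ((M1 * Mi1) * (M2 * Mi2) * G * Di); first ring.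
by rewrite e1 e2 !mul1r.
Qed.

Section Abs.
Variables (A : comPzRingType) (T Ti : nat -> nat -> U -> A).
Hypothesis HTi : forall a k w, T a k w * Ti a k w = 1.
Hypothesis Hb : forall a k w, ~~ validx X l (a, k) -> T a k w = 1.
Hypothesis Hsys : forall a m w, validx X l (a, m) ->
  T a m (sh w (- tinv X a)) * T a m (sh w (tinv X a))
  = T a m.-1 w * T a m.+1 w + Mfun iota T X a m w.
Hypothesis vX : valid_dynkin X.
Hypothesis l1 : (1 <= l)%N.

Lemma Tib a k w : ~~ validx X l (a, k) -> Ti a k w = 1.
Proof. by move=> hv; rewrite -(HTi a k w) Hb // mul1r. Qed.

Lemma MMi a k w : Mfun iota T X a k w * Mfun iota Ti X a k w = 1.
Proof.
rewrite !Mfun_list -big_split /=; apply: big1 => x _; exact: HTi.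
Qed.

Definition Yimg b k w : A :=
  if validx X l (b, k) then Mfun iota T X b k w * Ti b k.-1 w * Ti b k.+1 w else 0.
Definition Yiimg b k w : A :=
  if validx X l (b, k) then T b k.-1 w * T b k.+1 w * Mfun iota Ti X b k w else 0.

Lemma onepY b k w : okidx b k ->
  1 + Yimg b k w = T b k (sh w (- tinv X b)) * T b k (sh w (tinv X b))
                   * (Ti b k.-1 w * Ti b k.+1 w).
Proof.
rewrite /okidx /Yimg; case: ifP => hv /= ho.
  rewrite Hsys //.
  have -> : 1 = T b k.-1 w * Ti b k.-1 w * (T b k.+1 w * Ti b k.+1 w) by rewrite !HTi mulr1.
  ring.
by rewrite !Hb ?Tib ?out_range_invalid // addr0 !mulr1.
Qed.

Lemma Mfun_bound_one a k w : (1 <= a <= rank X)%N ->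
  k = 0%N \/ k = (tnum X a * l)%N -> Mfun iota Ti X a k w = 1.
Proof.
move=> ar hk; rewrite Mfun_list big1_seq // => x /andP[_ hx].
have := allP (Mbound w vX l1 ar hk) x hx => /= hv.
by case: x hx hv => [[b k'] w'] _ hv; apply: Tib.
Qed.

Lemma onepYi a k w : (1 <= a <= rank X)%N ->
  k = 0%N \/ validx X l (a, k) \/ k = (tnum X a * l)%N ->
  1 + Yiimg a k w = T a k (sh w (- tinv X a)) * T a k (sh w (tinv X a))
                    * Mfun iota Ti X a k w.
Proof.
move=> ar hk; rewrite /Yiimg; case: ifP => hv.
  rewrite Hsys //.
  have -> : 1 = Mfun iota T X a k w * Mfun iota Ti X a k w by rewrite MMi.
  ring.
have hk' : k = 0%N \/ k = (tnum X a * l)%N.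
  by case: hk => [->|[h|->]]; [left|rewrite h in hv|right].
by rewrite addr0 Mfun_bound_one // !Hb ?hv // !mulr1.
Qed.

Lemma near_valid a m : validx X l (a, m) ->
  (m.-1 = 0%N \/ validx X l (a, m.-1) \/ m.-1 = (tnum X a * l)%N) /\
  (m.+1 = 0%N \/ validx X l (a, m.+1) \/ m.+1 = (tnum X a * l)%N).
Proof.
rewrite /validx /=; move: (tnum X a * l)%N => t; lia.
Qed.

Lemma Ysys a m u : validx X l (a, m) ->
  Yimg a m (sh u (- tinv X a)) * Yimg a m (sh u (tinv X a))
    * ((1 + Yiimg a m.-1 u) * (1 + Yiimg a m.+1 u))
  = Nfun iota Yimg X a m u.
Proof.
move=> hv; have [ar _] := validx_am hv.
have [hm1 hp1] := near_valid hv.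
rewrite Nfun_list.
rewrite (eq_big_seq (fun x : atom =>
  (T x.1.1 x.1.2 (sh x.2 (- tinv X x.1.1)) * T x.1.1 x.1.2 (sh x.2 (tinv X x.1.1)))
  * (Ti x.1.1 x.1.2.-1 x.2 * Ti x.1.1 x.1.2.+1 x.2))); last first.
  by move=> x hx; apply: onepY; exact: (allP (Nok u vX hv) x hx).
rewrite /= big_split /=.
rewrite /Yimg hv (onepYi _ ar hm1) (onepYi _ ar hp1).
apply: (alg_id (M1 := Mfun iota T X a m.-1 u) (M2 := Mfun iota T X a m.+1 u)); rewrite ?HTi ?MMi //; last exact: core.
by rewrite -big_split /=; apply: big1 => x _; rewrite mulrACA !HTi mulr1.
Qed.

Lemma rel1 a m w :
  Mfun iota T X a m w * Ti a m.-1 w * Ti a m.+1 w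
  * (T a m.-1 w * T a m.+1 w * Mfun iota Ti X a m w) = 1.
Proof.
transitivity ((Mfun iota T X a m w * Mfun iota Ti X a m w)
  * ((T a m.-1 w * Ti a m.-1 w) * (T a m.+1 w * Ti a m.+1 w))); first ring.
by rewrite MMi !HTi !mulr1.
Qed.

Lemma rel2 a m w : validx X l (a, m) ->
  (1 + Mfun iota T X a m w * Ti a m.-1 w * Ti a m.+1 w)
  * (T a m.-1 w * T a m.+1 w * Ti a m (sh w (- tinv X a)) * Ti a m (sh w (tinv X a))) = 1.
Proof.
move=> hv; have := @onepY a m w; rewrite /Yimg hv => ->; last by rewrite /okidx hv.
transitivity ((T a m (sh w (- tinv X a)) * Ti a m (sh w (- tinv X a)))
     * (T a m (sh w (tinv X a)) * Ti a m (sh w (tinv X a)))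
     * ((T a m.-1 w * Ti a m.-1 w) * (T a m.+1 w * Ti a m.+1 w))); first ring.
by rewrite !HTi !mulr1.
Qed.

End Abs.

End Comb.


Lemma qprojB (R : comPzRingType) (S : R -> Prop) x y : qproj S (x - y) = qproj S x - qproj S y.
Proof. exact: raddfB. Qed.
Lemma qprojD (R : comPzRingType) (S : R -> Prop) x y : qproj S (x + y) = qproj S x + qproj S y.
Proof. exact: raddfD. Qed.
Lemma qprojM (R : comPzRingType) (S : R -> Prop) x y : qproj S (x * y) = qproj S x * qproj S y.
Proof. exact: pi_qmul. Qed.

Section Assembly.
Variables (X : dynkin) (l : nat) (U : zmodType) (iota : rat -> U).
Hypothesis iotaD : forall p q, iota (p + q) = iota p + iota q.
Hypothesis vX : valid_dynkin X.
Hypothesis l1 : (1 <= l)%N.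

Local Notation TT := (TT X l iota).
Local Notation TTinv := (TTinv X l iota).
Local Notation TR := (TRing X l iota).
Local Notation qT := (qproj (@Trel X l _ iota)).

Lemma TT_inv a k w : TT a k w * TTinv a k w = 1.
Proof.
rewrite /Defs.TT /Defs.TTinv -rmorphM /Tv /Tiv /var_T.
case: insubP => [i hv e | hv].
  apply/eqP; rewrite -subr_eq0 -(rmorph1 qT) -rmorphB; apply/eqP/qproj_rel.
  by left; exists i, w.
by rewrite mulr1 rmorph1.
Qed.

Lemma TT_b a k w : ~~ validx X l (a, k) -> TT a k w = 1.
Proof. by move=> hv; rewrite /Defs.TT /Tv /var_T insubN // rmorph1. Qed.

Lemma TT_map a m w : Mfun iota TT X a m w = qT (Mfun iota (@Tv X l U) X a m w).
Proof. by rewrite !Mfun_list rmorph_prod. Qed.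


Lemma TT_sys a m w : validx X l (a, m) ->
  TT a m (sh iota w (- tinv X a)) * TT a m (sh iota w (tinv X a))
  = TT a m.-1 w * TT a m.+1 w + Mfun iota TT X a m w.
Proof.
move=> hv.
rewrite TT_map /Defs.TT.
set A1 := Tv X l a m (sh iota w (- tinv X a)).
set A2 := Tv X l a m (sh iota w (tinv X a)).
set B1 := Tv X l a m.-1 w.
set B2 := Tv X l a m.+1 w.
set C := Mfun iota (@Tv X l U) X a m w.
pose S := @Trel X l _ iota.
have e : qproj S (A1 * A2 - (B1 * B2 + C))
   = qproj S A1 * qproj S A2 - (qproj S B1 * qproj S B2 + qproj S C).
  exact: (etrans (qprojB S (A1 * A2) (B1 * B2 + C))
           (congr2 (fun x y => x - y) (qprojM S A1 A2)
              (etrans (qprojD S (B1 * B2) C) (congr2 +%R (qprojM S B1 B2) erefl)))).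
have h : qproj S (A1 * A2 - (B1 * B2 + C)) = 0.
  by apply: qproj_rel; right; exists a, m, w; split.

apply/eqP; rewrite -subr_eq0; apply/eqP; exact: (etrans (esym e) h).
Qed.


Definition vY (y : YVar X l U) : TR :=
  let: (kd, i, w) := y in
  let a := (val i).1 in let m := (val i).2 in
  if nat_of_ord kd == 0%N then phi_image X l iota a m w
  else if nat_of_ord kd == 1%N then TT a m.-1 w * TT a m.+1 w * Mfun iota TTinv X a m w
  else TT a m.-1 w * TT a m.+1 w * TTinv a m (sh iota w (- tinv X a))
       * TTinv a m (sh iota w (tinv X a)).

Local Notation f := (ev vY).

Lemma evY (y : YVar X l U) : ev vY (<< ucm y >> : PolY X l U) = vY y.
Proof. exact: ev_var. Qed.
Lemma evB (x y : PolY X l U) : ev vY (x - y) = ev vY x - ev vY y.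
Proof. exact: rmorphB. Qed.
Lemma evD (x y : PolY X l U) : ev vY (x + y) = ev vY x + ev vY y.
Proof. exact: rmorphD. Qed.
Lemma evM (x y : PolY X l U) : ev vY (x * y) = ev vY x * ev vY y.
Proof. exact: rmorphM. Qed.
Lemma ev1 : ev vY (1 : PolY X l U) = 1.
Proof. exact: rmorph1. Qed.
Lemma evP (s : seq (atom U)) (F : atom U -> PolY X l U) :
  ev vY (\prod_(x <- s) F x) = \prod_(x <- s) ev vY (F x).
Proof. exact: rmorph_prod. Qed.



Lemma fYv b k w : f (Yv X l b k w) = Yimg X l iota TT TTinv b k w.
Proof.
rewrite /Yv /var_Y /Yimg; case: insubP => [i hv e|hv].
  by rewrite evY /= e hv.
by rewrite (negbTE hv) rmorph0.
Qed.


Lemma fYiv b k w : f (Yiv X l b k w) = Yiimg X l iota TT TTinv b k w.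
Proof.
rewrite /Yiv /var_Y /Yiimg; case: insubP => [i hv e|hv].
  by rewrite evY /= e hv.
by rewrite (negbTE hv) rmorph0.
Qed.

Lemma fP a m u :
  f (Yv X l a m (sh iota u (- tinv X a)) * Yv X l a m (sh iota u (tinv X a))
     * ((1 + Yiv X l a m.-1 u) * (1 + Yiv X l a m.+1 u)))
  = Yimg X l iota TT TTinv a m (sh iota u (- tinv X a))
    * Yimg X l iota TT TTinv a m (sh iota u (tinv X a))
    * ((1 + Yiimg X l iota TT TTinv a m.-1 u) * (1 + Yiimg X l iota TT TTinv a m.+1 u)).
Proof.
exact: (etrans (evM _ _) (congr2 *%R
  (etrans (evM _ _) (congr2 *%R (fYv _ _ _) (fYv _ _ _)))
  (etrans (evM _ _) (congr2 *%R
     (etrans (evD _ _) (congr2 +%R ev1 (fYiv _ _ _)))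
     (etrans (evD _ _) (congr2 +%R ev1 (fYiv _ _ _))))))).
Qed.

Lemma fN a m u :
  f (Nfun iota (@Yv X l U) X a m u) = Nfun iota (Yimg X l iota TT TTinv) X a m u.
Proof.
rewrite !Nfun_list evP; apply: eq_bigr => x _.
exact: (etrans (evD _ _) (congr2 +%R ev1 (fYv _ _ _))).
Qed.

Lemma f_rel p : @Yrel X l _ iota p -> f p = 0.
Proof.
case=> [[i [u ->]]|[[i [u ->]]|[a [m [u [hv ->]]]]]].
- rewrite (etrans (evB _ _) (congr2 (fun a b => a - b)
            (etrans (evM _ _) (congr2 *%R (evY _) (evY _))) ev1)).
  apply/eqP; rewrite subr_eq0; apply/eqP. 
  exact: (rel1 X iota TT_inv (val i).1 (val i).2 u). 
- rewrite (etrans (evB _ _) (congr2 (fun a b => a - b)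
            (etrans (evM _ _) (congr2 *%R (etrans (evD _ _) (congr2 +%R ev1 (evY _))) (evY _))) ev1)).
  apply/eqP; rewrite subr_eq0; apply/eqP. 
  have hv : validx X l ((val i).1, (val i).2) by rewrite -surjective_pairing; exact: valP.
  exact: (rel2 TT_inv TT_b TT_sys u hv). 
- rewrite (evB _ _) (fP a m u) (fN a m u).
  by rewrite (Ysys iotaD TT_inv TT_b TT_sys vX l1 u hv) subrr.
Qed.


Lemma main_hom : defines_ring_hom X l iota.
Proof.
exists (desc f_rel) => a m u hv.
transitivity (f (Yv X l a m u)); first exact: (descE f_rel).
by rewrite fYv /Yimg hv.
Qed.
End Assembly.


Theorem proposition3p8 (X : dynkin) (l : nat) :
  valid_dynkin X -> (2 <= l)%N ->
  defines_ring_hom X l iota_C /\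
  (forall xi : Cc, ~ (exists q : rat, xi = ratr q * two_pi_i) ->
     defines_ring_hom X l (iota_xi xi)).
Proof.
move=> vX l2; have l1 : (1 <= l)%N by lia.
split.
  by apply: main_hom => // p q; rewrite /iota_C rmorphD.
by move=> xi _; apply: main_hom => // p q; rewrite /iota_xi rmorphD raddfD.
Qed.
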